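(* Let $F_n$ be the free group on $A_n=\{a_1,\dots,a_n\}$, and endow the category of $F_n$-sets with the closed model structure whose weak equivalences are the $F_n$-maps $f:X\to Y$ such that for all $p\ge1$ composition with $C(f)$ is a bijection $\mathrm{Hom}_{\mathrm{Gph}}(c_p,C(X,A_n,F_n))\to\mathrm{Hom}_{\mathrm{Gph}}(c_p,C(Y,A_n,F_n))$, whose fibrations are all morphisms, and whose cofibrations are the maps with the left lifting property with respect to all weak equivalences. Then an $F_n$-set $X$ is cofibrant (i.e. $\emptyset\to X$ is a cofibration) if and only if $X\in R_n$, that is, its Cayley graph $C(X,A_n,F_n)$ is obtained by attaching a forest to a disjoint union of directed cycles: every connected component $K$ of $C(X,A_n,F_n)$ contains a subgraph isomorphic to some $c_p$ ($p\ge1$) such that removing the arcs of this subgraph from $K$ leaves a forest (in the underlying undirected sense) each of whose trees contains exactly one node of that subgraph.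
   Context: A directed graph consists of nodes, arcs and source/target maps; $\mathrm{Gph}$ is the category of directed graphs. For $p\ge1$, $c_p$ is the directed graph with nodes $\mathbb{Z}/p\mathbb{Z}$ and exactly one arc from $[n]$ to $[n+1]$ for each $[n]$. For an $F_n$-set $X$, $C(X,A_n,F_n)$ is the directed Cayley graph with node set $X$, arc set $X\times A_n$, source $(x,a)\mapsto x$, target $(x,a)\mapsto a\cdot x$. Connected components are those of the underlying undirected graph. *)

(* Defs.v *)
From mathcomp Require Import all_boot.
Set Implicit Arguments. Unset Strict Implicit. Unset Printing Implicit Defensive.

Record Gph := { node : Type; arc : Type; src : arc -> node; tgt : arc -> node }.

Definition is_ghom (G H : Gph) (fn : node G -> node H) (fa : arc G -> arc H) :=
  forall e, src (fa e) = fn (src e) /\ tgt (fa e) = fn (tgt e).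

(* The map Hom_Gph(C, G) -> Hom_Gph(C, H), phi |-> g o phi, is a bijection
   (homs are pairs of functions, compared pointwise). *)
Definition postcomp_bij (C G H : Gph) (gn : node G -> node H) (ga : arc G -> arc H) :=
  (forall (phn psn : node C -> node G) (pha psa : arc C -> arc G),
      is_ghom phn pha -> is_ghom psn psa ->
      (forall v, gn (phn v) = gn (psn v)) -> (forall e, ga (pha e) = ga (psa e)) ->
      (forall v, phn v = psn v) /\ (forall e, pha e = psa e)) /\
  (forall (chn : node C -> node H) (cha : arc C -> arc H), is_ghom chn cha ->
      exists (phn : node C -> node G) (pha : arc C -> arc G),
        is_ghom phn pha /\ (forall v, gn (phn v) = chn v) /\ (forall e, ga (pha e) = cha e)).

Definition cyc (p : nat) : Gph :=
  {| node := 'I_p; arc := 'I_p; src := fun k => k; tgt := fun k => ordS k |}.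

(* An F_n-set, F_n free on A_n = {a_1..a_n} (indexed by 'I_n), is given by the
   action of the free generators: n bijections of the carrier. *)
Record FnSet (n : nat) := {
  carrier : Type;
  act : 'I_n -> carrier -> carrier;
  act_bij : forall a, bijective (act a) }.

Definition equivariant n (X Y : FnSet n) (f : carrier X -> carrier Y) :=
  forall (a : 'I_n) x, f (act a x) = act a (f x).

Definition Cay n (X : FnSet n) : Gph :=
  {| node := carrier X; arc := (carrier X * 'I_n)%type;
     src := fun e => e.1; tgt := fun e => act e.2 e.1 |}.

Definition Cay_arc n (X Y : FnSet n) (f : carrier X -> carrier Y)
  : arc (Cay X) -> arc (Cay Y) := fun e => (f e.1, e.2).

Definition weq n (X Y : FnSet n) (f : carrier X -> carrier Y) :=
  forall p, 0 < p -> @postcomp_bij (cyc p) (Cay X) (Cay Y) f (Cay_arc f).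

(* cofibrations: LLP w.r.t. all weak equivalences (= trivial fibrations,
   fibrations being all morphisms) *)
Definition cofibration n (X Y : FnSet n) (i : carrier X -> carrier Y) :=
  forall (A B : FnSet n) (q : carrier A -> carrier B),
    equivariant q -> weq q ->
    forall (u : carrier X -> carrier A) (v : carrier Y -> carrier B),
      equivariant u -> equivariant v -> (forall x, q (u x) = v (i x)) ->
      exists h : carrier Y -> carrier A,
        equivariant h /\ (forall x, h (i x) = u x) /\ (forall y, q (h y) = v y).

Definition emptyFn (n : nat) : FnSet n :=
  {| carrier := Empty_set; act := fun _ x => x;
     act_bij := fun _ => Bijective (fun x : Empty_set => erefl x) (fun x => erefl x) |}.

Definition cofibrant n (X : FnSet n) :=
  @cofibration n (emptyFn n) X (fun e : Empty_set => match e with end).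

Definition links (G : Gph) (e : arc G) (x y : node G) :=
  (src e = x /\ tgt e = y) \/ (src e = y /\ tgt e = x).

Inductive connected (G : Gph) (S : arc G -> Prop) : node G -> node G -> Prop :=
| conn_refl x : connected S x x
| conn_step x y z (e : arc G) : S e -> links e x y -> connected S y z -> connected S x z.

Definition has_cycle (G : Gph) (S : arc G -> Prop) :=
  exists (m : nat) (v : nat -> node G) (e : nat -> arc G),
    0 < m /\ v m = v 0 /\
    (forall i, i < m -> S (e i) /\ links (e i) (v i) (v i.+1)) /\
    (forall i j, i < j -> j < m -> e i <> e j /\ v i <> v j).

Definition in_Rn n (X : FnSet n) :=
  forall x0 : carrier X,
    let K := fun y : node (Cay X) => @connected (Cay X) (fun _ => True) x0 y in
    exists (p : nat) (phn : node (cyc p) -> node (Cay X)) (pha : arc (cyc p) -> arc (Cay X)),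
      0 < p /\ is_ghom phn pha /\ injective phn /\ injective pha /\
      (forall k, K (phn k)) /\
      let S := fun e : arc (Cay X) => K (src e) /\ ~ (exists k, pha k = e) in
      ~ @has_cycle (Cay X) S /\
      (forall y, K y -> exists k, @connected (Cay X) S y (phn k) /\
                          forall k', @connected (Cay X) S y (phn k') -> phn k' = phn k).

(* Main.v *)
Require Import Defs.
From mathcomp Require Import all_boot.
From mathcomp Require Import zify.
From Stdlib Require Import ClassicalEpsilon ProofIrrelevance FunctionalExtensionality PropExtensionality Classical.
Require Import Defs.
Set Implicit Arguments. Unset Strict Implicit. Unset Printing Implicit Defensive.

Module Part0.

Lemma least_ex (P : nat -> Prop) : (exists n, P n) -> exists n, P n /\ forall m, P m -> n <= m.
Proof.
move=> [n Pn]; apply: NNPP => Hno.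
have H : forall k, forall m, m <= k -> ~ P m.
  elim=> [|k IH] m Hm Pm.
    apply: Hno; exists m; split=> // m' _; move: Hm; rewrite leqn0 => /eqP->; done.
  apply: Hno; exists m; split=> // m' Pm'.
  case: (leqP m m') => // Hlt; exfalso; apply: (IH m') => //; lia.
exact: (H n n (leqnn n) Pn).
Qed.

Definition minnat (P : nat -> Prop) : nat :=
  match excluded_middle_informative (exists n, P n) with
  | left h => proj1_sig (constructive_indefinite_description _ (least_ex h))
  | right _ => 0
  end.

Lemma minnat_spec (P : nat -> Prop) : (exists n, P n) -> P (minnat P) /\ forall m, P m -> minnat P <= m.
Proof.
move=> h; rewrite /minnat; case: excluded_middle_informative => // h'.
by case: (constructive_indefinite_description _ _).
Qed.

Definition pickopt (T : Type) (P : T -> Prop) : option T :=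
  match excluded_middle_informative (exists x, P x) with
  | left h => Some (proj1_sig (constructive_indefinite_description _ h))
  | right _ => None
  end.

Lemma pickoptP (T : Type) (P : T -> Prop) : (exists x, P x) -> exists x, pickopt P = Some x /\ P x.
Proof.
move=> h; rewrite /pickopt; case: excluded_middle_informative => // h'.
case: (constructive_indefinite_description _ _) => x Px; by exists x.
Qed.

Lemma pickoptS (T : Type) (P : T -> Prop) x : pickopt P = Some x -> P x.
Proof.
rewrite /pickopt; case: excluded_middle_informative => // h.
case: (constructive_indefinite_description _ _) => y Py /= [<-] //.
Qed.

Lemma cid_irrel (T : Type) (P Q : T -> Prop) (e : P = Q) (p : exists x, P x) (q : exists x, Q x) :
  proj1_sig (constructive_indefinite_description _ p) = proj1_sig (constructive_indefinite_description _ q).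
Proof. subst Q; by rewrite (proof_irrelevance _ p q). Qed.

Lemma bij_ex (T : Type) (f : T -> T) : bijective f -> exists g, cancel f g /\ cancel g f.
Proof. by case=> g h1 h2; exists g. Qed.

Definition ainv n (X : FnSet n) (a : 'I_n) : carrier X -> carrier X :=
  proj1_sig (constructive_indefinite_description _ (bij_ex (act_bij X a))).

Lemma actK n (X : FnSet n) a : cancel (@act n X a) (ainv a).
Proof. rewrite /ainv; case: (constructive_indefinite_description _ _) => g [] //. Qed.
Lemma ainvK n (X : FnSet n) a : cancel (ainv a) (@act n X a).
Proof. rewrite /ainv; case: (constructive_indefinite_description _ _) => g [] //. Qed.
Lemma act_inj n (X : FnSet n) a : injective (@act n X a).
Proof. exact: can_inj (@actK n X a). Qed.

Lemma equiv_ainv n (X Y : FnSet n) (f : carrier X -> carrier Y) :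
  equivariant f -> forall a x, f (ainv a x) = ainv a (f x).
Proof. move=> hf a x; apply: (@act_inj _ Y a); by rewrite -hf !ainvK. Qed.

Lemma links_sym (G : Gph) (e : arc G) x y : links e x y -> links e y x.
Proof. by rewrite /links; case=> h; [right|left]. Qed.

Lemma links_uniq (G : Gph) (e : arc G) x y x' y' : links e x y -> links e x' y' ->
  (x = x' /\ y = y') \/ (x = y' /\ y = x').
Proof. rewrite /links; case=> [[<- <-]|[<- <-]]; case=> [[-> ->]|[-> ->]]; auto. Qed.

Lemma conn_trans (G : Gph) (S : arc G -> Prop) x y z :
  connected S x y -> connected S y z -> connected S x z.
Proof. elim=> // x1 y1 z1 e Se l _ IH h; exact: conn_step Se l (IH h). Qed.

Lemma conn_sym (G : Gph) (S : arc G -> Prop) x y : connected S x y -> connected S y x.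
Proof.
elim=> [x1|x1 y1 z1 e Se l _ IH]; first exact: conn_refl.
apply: conn_trans IH _; apply: conn_step Se (links_sym l) (conn_refl _ _).
Qed.

Lemma conn1 (G : Gph) (S : arc G -> Prop) e x y : S e -> links e x y -> connected S x y.
Proof. move=> Se l; exact: conn_step Se l (conn_refl _ _). Qed.

Lemma conn_mono (G : Gph) (S S' : arc G -> Prop) x y : (forall e, S e -> S' e) ->
  connected S x y -> connected S' x y.
Proof.
move=> hS; elim=> [x1|x1 y1 z1 e Se l _ IH]; first exact: conn_refl.
exact: conn_step (hS _ Se) l IH.
Qed.

Lemma mk_cycle (G : Gph) (S : arc G -> Prop) (M : nat) (Q : nat -> node G) (E : nat -> arc G) :
  0 < M -> Q M = Q 0 -> (forall i, i < M -> S (E i) /\ links (E i) (Q i) (Q i.+1)) ->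
  (forall i j, i < j -> j < M -> Q i <> Q j) -> (M = 2 -> E 0 <> E 1) -> has_cycle S.
Proof.
move=> M0 QM hE hQ h2; exists M, Q, E; split=> //; split=> //; split=> // i j ij jM.
split; last exact: hQ.
move=> Eij; have [_ li] := hE i (ltn_trans ij jM); have [_ lj] := hE j jM.
rewrite Eij in li; case: (links_uniq li lj) => [[h _]|[h1 h2']]; first exact: hQ ij jM h.
have [jM1|jM1] : j.+1 < M \/ j.+1 = M by lia.
  by apply: (hQ i j.+1) => //; lia.
rewrite jM1 QM in h1.
have i0 : i = 0.
  case: (posnP i) => // ip; exfalso; apply: (hQ 0 i) => //; lia.
subst i.
have j1 : j = 1.
  case: (ltngtP j 1) => // jp; first lia.
  exfalso; apply: (hQ 1 j) => //; lia.
subst j; apply: h2 => //; lia.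
Qed.

End Part0.
Import Part0.

Module Part1.

Definition hasper (T : Type) (f : nat -> T) r := forall i, f (r + i) = f i.

Lemma per_mul (T : Type) (f : nat -> T) r c : hasper f r -> forall i, f (c * r + i) = f i.
Proof. move=> h; elim: c => [|c IH] i //; by rewrite mulSn -addnA h IH. Qed.

Lemma per_modv (T : Type) (f : nat -> T) r : hasper f r -> 0 < r -> forall i, f i = f (i %% r).
Proof. move=> h r0 i; by rewrite {1}(divn_eq i r) per_mul. Qed.

Lemma per_mod (T : Type) (f : nat -> T) r q : hasper f r -> hasper f q -> 0 < r -> hasper f (q %% r).
Proof.
move=> hr hq r0 i; rewrite -(hq i) {2}(divn_eq q r) -addnA per_mul //.
Qed.

Lemma per_transfer (T : Type) (f g : nat -> T) k k' p q : 0 < p -> hasper f p -> hasper g q ->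
  (forall i, f (k + i) = g (k' + i)) -> hasper f q.
Proof.
move=> p0 hp hq hfg j.
have E1 : f j = f (k + (p.-1 * k + j)) by rewrite -(per_mul k hp j); congr f; nia.
have E2 : f (q + j) = f (k + (q + (p.-1 * k + j))) by rewrite -(per_mul k hp (q + j)); congr f; nia.
by rewrite E1 E2 !hfg addnCA hq.
Qed.

Lemma shift_per (T : Type) (f : nat -> T) k r p : 0 < p -> hasper f p ->
  (forall i, f (k + i) = f (k + r + i)) -> hasper f r.
Proof.
move=> p0 hp h j.
have E1 : f j = f (k + (p.-1 * k + j)) by rewrite -(per_mul k hp j); congr f; nia.
have E2 : f (r + j) = f (k + r + (p.-1 * k + j)) by rewrite -(per_mul k hp (r + j)); congr f; nia.
by rewrite E1 E2 h.
Qed.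

Section Words.
Variable n : nat.
Variable d0 : 'I_n.

Definition wf (R : seq 'I_n) i := nth d0 R (i %% size R).

Lemma wf_eqmod R i j : i = j %[mod size R] -> wf R i = wf R j.
Proof. by rewrite /wf => ->. Qed.

Lemma wf_per R : 0 < size R -> hasper (wf R) (size R).
Proof. move=> p0 i; apply: wf_eqmod; by rewrite modnDl. Qed.

Definition rotb R R' s := (size R' == size R) && all (fun i => wf R' i == wf R (s + i)) (iota 0 (size R)).

Lemma rotbP R R' s : 0 < size R ->
  reflect (size R' = size R /\ forall i, wf R' i = wf R (s + i)) (rotb R R' s).
Proof.
move=> p0; rewrite /rotb; apply: (iffP andP) => [[/eqP sz /allP h]|[sz h]]; split=> //.
- move=> i; have ip : i %% size R \in iota 0 (size R) by rewrite mem_iota ltn_pmod.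
  move/eqP: (h _ ip); rewrite (@wf_eqmod R' (i %% size R) i) ?sz ?modn_mod // => ->.
  apply: wf_eqmod; by rewrite modnDmr.
- by rewrite sz.
- by apply/allP => i _; rewrite h.
Qed.

Definition classb R R' := has (rotb R R') (iota 0 (size R)).

Lemma classbP R R' : 0 < size R ->
  reflect (size R' = size R /\ exists s, forall i, wf R' i = wf R (s + i)) (classb R R').
Proof.
move=> p0; apply: (iffP hasP) => [[s _ /(rotbP _ _ p0) [sz h]]|[sz [s h]]].
  by split=> //; exists s.
exists (s %% size R); first by rewrite mem_iota ltn_pmod.
apply/rotbP => //; split=> // i; rewrite h; apply: wf_eqmod; by rewrite modnDml.
Qed.

Definition primb R := all (fun r => ~~ rotb R R r) (iota 1 (size R).-1).

Lemma primbP R : 0 < size R -> reflect (forall r, 0 < r < size R -> ~ hasper (wf R) r) (primb R).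
Proof.
move=> p0; apply: (iffP allP) => [h r /andP [r0 rp] hr|h r].
  have : r \in iota 1 (size R).-1 by rewrite mem_iota; lia.
  move/h => /negP; apply; apply/rotbP => //; split=> // i; by rewrite hr.
rewrite mem_iota => /andP [rr1 rr2]; apply/negP => /(rotbP _ _ p0) [_ hr].
apply: (h r); first by clear -rr1 rr2 p0; lia.
by move=> i; rewrite -hr.
Qed.

Definition rep R := choose (classb R) R.
Definition lynb R := (0 < size R) && primb R && (rep R == R).

Lemma class_refl R : 0 < size R -> classb R R.
Proof. move=> p0; apply/classbP => //; split=> //; by exists 0. Qed.

Lemma class_size R R' : 0 < size R -> classb R R' -> size R' = size R.
Proof. by move=> p0 /(classbP _ p0) []. Qed.

Lemma class_sym R R' : 0 < size R -> classb R R' -> classb R' R.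
Proof.
move=> p0 /(classbP _ p0) [sz [s h]]; have p0' : 0 < size R' by rewrite sz.
apply/classbP => //; split=> //; exists (size R - s %% size R) => i.
rewrite h; apply: wf_eqmod.
have hlt := ltn_pmod s p0.
have e := divn_eq s (size R).
have -> : s + (size R - s %% size R + i) = (s %/ size R).+1 * size R + i.
  rewrite mulSn; move: e hlt; set a := s %/ size R * size R; set b := s %% size R; lia.
by rewrite modnMDl.
Qed.

Lemma class_trans R R' R'' : 0 < size R -> classb R R' -> classb R' R'' -> classb R R''.
Proof.
move=> p0 /(classbP _ p0) [sz [s h]]; have p0' : 0 < size R' by rewrite sz.
move=> /(classbP _ p0') [sz' [s' h']]; apply/classbP => //; split; first by rewrite sz'.
exists (s + s') => i; by rewrite h' h addnA.
Qed.

Lemma rep_eq R R' : 0 < size R -> classb R R' -> rep R = rep R'.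
Proof.
move=> p0 c; have p0' : 0 < size R' by rewrite (class_size p0 c).
rewrite /rep (@eq_choose _ (classb R) (classb R')); last first.
  move=> x; apply/idP/idP => h.
    exact: class_trans (class_sym p0 c) h.
  exact: class_trans c h.
apply: choose_id; [exact: class_sym|exact: class_refl].
Qed.

Lemma rep_class R : 0 < size R -> classb R (rep R).
Proof. move=> p0; apply: chooseP; exact: class_refl. Qed.

Lemma prim_class R R' : 0 < size R -> classb R R' -> primb R -> primb R'.
Proof.
move=> p0 c /(primbP p0) pr; have sz := class_size p0 c.
have p0' : 0 < size R' by rewrite sz.
have /(classbP _ p0') [_ [t ht]] := class_sym p0 c.
apply/primbP => // r rr hr; apply: (pr r); first by rewrite -sz.
move=> j; by rewrite !ht addnCA hr.
Qed.

Definition FixW (W : nat -> 'I_n) R k := lynb R /\ k < size R /\ forall i, W i = wf R (k + i).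

Lemma lyn_pos R : lynb R -> 0 < size R.
Proof. by case/andP => /andP []. Qed.
Lemma lyn_prim R : lynb R -> primb R.
Proof. by case/andP => /andP []. Qed.
Lemma lyn_rep R : lynb R -> rep R = R.
Proof. by case/andP => _ /eqP. Qed.

Lemma prim_per R q : 0 < size R -> primb R -> hasper (wf R) q -> q %% size R = 0.
Proof.
move=> p0 /(primbP p0) pr hq; case: (posnP (q %% size R)) => // qp.
exfalso; apply: (pr (q %% size R)); first by rewrite qp ltn_pmod.
exact: per_mod (wf_per p0) hq p0.
Qed.

Lemma fix_dvd W m R k : 0 < m -> hasper W m -> FixW W R k -> m %% size R = 0.
Proof.
move=> m0 hW [ly [kp hk]]; have p0 := lyn_pos ly.
apply: (prim_per p0 (lyn_prim ly)).
apply: (shift_per (k:=k) p0 (wf_per p0)) => i; by rewrite -hk -addnA -hk hW.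
Qed.

Lemma fix_unique W R k R' k' : FixW W R k -> FixW W R' k' -> R = R' /\ k = k'.
Proof.
move=> [ly [kp hk]] [ly' [kp' hk']].
have p0 := lyn_pos ly; have p0' := lyn_pos ly'.
have hfg : forall i, wf R (k + i) = wf R' (k' + i) by move=> i; rewrite -hk -hk'.
have h1 := per_transfer p0 (wf_per p0) (wf_per p0') hfg.
have h2 := per_transfer p0' (wf_per p0') (wf_per p0) (fun i => esym (hfg i)).
have d1 := prim_per p0 (lyn_prim ly) h1.
have d2 := prim_per p0' (lyn_prim ly') h2.
have sz : size R' = size R.
  apply/eqP; rewrite eqn_leq; apply/andP; split; apply: dvdn_leq => //; by rewrite /dvdn ?d1 ?d2.
have cl : classb R R'.
  apply/classbP => //; split=> //; exists (k + (size R - k')) => i.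
  rewrite -(wf_per p0' i) sz.
  have -> : size R + i = k' + ((size R - k') + i) by rewrite -sz; lia.
  by rewrite -hfg addnA.
have eR : R = R' by rewrite -(lyn_rep ly) -(lyn_rep ly'); exact: rep_eq.
subst R'; split=> //.
have pr := primbP p0 (lyn_prim ly).
wlog kk : k k' kp kp' hk hk' hfg / k <= k'.
  move=> hw; case: (leqP k k') => kk; first exact: hw.
  symmetry; apply: (hw k' k kp' kp hk' hk) => [i|]; first by rewrite hfg.
  exact: ltnW.
case: (ltngtP k k') kk => // kk _.
exfalso; apply: (pr (k' - k)); first by clear -kk kp'; lia.
apply: (shift_per (k:=k) p0 (wf_per p0)) => i; rewrite hfg; congr wf; clear -kk; lia.
Qed.

Lemma fix_exists W m : 0 < m -> hasper W m -> exists R k, FixW W R k.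
Proof.
move=> m0 hW.
have [d [[d0' hd] dmin]] := least_ex (ex_intro (fun r => 0 < r /\ hasper W r) m (conj m0 hW)).
pose P0 := mkseq W d.
have szP : size P0 = d by rewrite size_mkseq.
have p0 : 0 < size P0 by rewrite szP.
have wP : forall i, wf P0 i = W i.
  move=> i; rewrite /wf szP nth_mkseq ?ltn_pmod //; exact: (esym (per_modv hd d0' i)).
have prP : primb P0.
  apply/primbP => // r /andP [r0 rd] hr.
  have : d <= r by apply: dmin; split=> // i; rewrite -!wP.
  rewrite -szP; lia.
pose R := rep P0.
have cl := rep_class p0; rewrite -/R in cl.
have /(classbP _ p0) [szR [s hs]] := cl.
have pR : 0 < size R by rewrite szR.
exists R, ((d - s %% d) %% d); split; last split.
- apply/andP; split; first (apply/andP; split=> //; exact: prim_class cl prP).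
  by rewrite /R -(rep_eq p0 cl).
- by rewrite szR szP ltn_pmod.
- move=> i; rewrite hs wP (per_modv hd d0') [in RHS](per_modv hd d0'); congr W.
  rewrite addnA -modnDml.
  have -> : (s + (d - s %% d) %% d) %% d = 0.
    rewrite modnDmr; have hlt := ltn_pmod s d0'.
    have e := divn_eq s d.
    have -> : s + (d - s %% d) = (s %/ d).+1 * d.
      rewrite mulSn; move: e hlt; set a := s %/ d * d; set b := s %% d; lia.
    by rewrite modnMl.
  by rewrite add0n.
Qed.

End Words.

End Part1.
Import Part1.

Module Part2.

Section Std.
Variable n : nat.
Variable d0 : 'I_n.

Definition letter := ('I_n * bool)%type.
Definition linv (l : letter) : letter := (l.1, ~~ l.2).
Lemma linvK : involutive linv.
Proof. by case=> a b; rewrite /linv /= negbK. Qed.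

Definition redrel (x y : letter) := y != linv x.
Definition reducedw (u : seq letter) := if u is x :: s then path redrel x s else true.
Notation wf := (wf d0).
Definition okfirst R k (u : seq letter) :=
  if u is x :: s then (last x s != (wf R k, true)) && (last x s != (wf R (k + (size R).-1), false))
  else true.
Definition validb R (s : nat * seq letter) := [&& s.1 < size R, reducedw s.2 & okfirst R s.1 s.2].

Definition st (R : seq 'I_n) (l : letter) (s : nat * seq letter) : nat * seq letter :=
  match s.2 with
  | l' :: u' => if l' == linv l then (s.1, u') else (s.1, l :: s.2)
  | [::] => if l == (wf R s.1, true) then (s.1.+1 %% size R, [::])
            else if l == (wf R (s.1 + (size R).-1), false) then ((s.1 + (size R).-1) %% size R, [::])
            else (s.1, [:: l])
  end.

Lemma arith1 k p : 0 < p -> k < p -> (k.+1 %% p + p.-1) %% p = k.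
Proof.
move=> p0 kp; rewrite modnDml.
have -> : k.+1 + p.-1 = k + p by lia.
by rewrite modnDr modn_small.
Qed.

Lemma arith2 k p : 0 < p -> k < p -> ((k + p.-1) %% p).+1 %% p = k.
Proof.
move=> p0 kp; rewrite -addn1 modnDml.
have -> : k + p.-1 + 1 = k + p by lia.
by rewrite modnDr modn_small.
Qed.

Lemma st_valid R l s : 0 < size R -> validb R s -> validb R (st R l s).
Proof.
move=> p0; case: s => k [|l' u'] /and3P [kp red ok]; rewrite /= in kp red ok; rewrite /st /=.
- case: eqP => [El|Nl]; first by rewrite /validb /= ltn_pmod.
  case: eqP => [El2|Nl2]; first by rewrite /validb /= ltn_pmod.
  rewrite /validb /= kp /=; apply/andP; split; by apply/eqP.
- case: eqP => [E|N].
    rewrite /validb /= kp; case: u' red ok => [|x s] //= /andP [_ ->].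
    exact: id.
  rewrite /validb /= kp red andbT /redrel ok andbT; by apply/eqP.
Qed.

Lemma stK R l s : 0 < size R -> validb R s -> st R (linv l) (st R l s) = s.
Proof.
move=> p0; case: s => k [|l' u'] /and3P [kp red ok]; rewrite /= in kp red ok; rewrite /st /=.
- case: eqP => [El|Nl].
    rewrite /= El /linv /=.
    case: eqP => [Ebad|_]; first congruence.
    have -> : wf R (k.+1 %% size R + (size R).-1) = wf R k.
      apply: wf_eqmod; by rewrite arith1 // modn_small.
    by rewrite eqxx arith1.
  case: eqP => [El2|Nl2].
    rewrite /= El2 /linv /=.
    have -> : wf R ((k + (size R).-1) %% size R) = wf R (k + (size R).-1).
      apply: wf_eqmod; by rewrite modn_mod.
    by rewrite eqxx arith2.
  by rewrite /= linvK eqxx.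
- case: eqP => [E|N] /=.
    case: u' red ok => [|x s] /=.
      move=> _ /andP [ok1 ok2]; rewrite -E.
      by rewrite (negbTE ok1) (negbTE ok2).
    move=> /andP [rx _] _; rewrite linvK.
    have -> : (x == l) = false.
      apply/negbTE; move: rx; rewrite /redrel E linvK //.
    by rewrite E.
  by rewrite linvK eqxx.
Qed.

Definition ncount (u : seq letter) := count (fun l : letter => ~~ l.2) u.

Lemma st_step R a k u :
  (u = [::] /\ a = wf R k /\ st R (a, true) (k, u) = (k.+1 %% size R, [::])) \/
  (ncount (st R (a, true) (k, u)).2 < ncount u) \/
  (ncount (st R (a, true) (k, u)).2 = ncount u /\ size (st R (a, true) (k, u)).2 = (size u).+1).
Proof.
rewrite /st /=; case: u => [|l' u'].
  case: eqP => [[->]|N]; first by left.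
  case: eqP => [[]|_] //; by right; right.
case: eqP => [E|N]; first by right; left; rewrite /ncount /= E /=; lia.
by right; right.
Qed.

Definition A0pred (t : seq 'I_n * (nat * seq letter)) := lynb d0 t.1 && validb t.1 t.2.
Definition A0car := {t : seq 'I_n * (nat * seq letter) | A0pred t}.

Lemma A0st_proof l (t : A0car) : A0pred ((sval t).1, st (sval t).1 l (sval t).2).
Proof.
case: t => [[R s] /andP [ly v]] /=; apply/andP; split=> //.
exact: st_valid (lyn_pos ly) v.
Qed.

Definition A0st l (t : A0car) : A0car := exist A0pred ((sval t).1, st (sval t).1 l (sval t).2) (A0st_proof l t).

Lemma A0stK l : cancel (A0st l) (A0st (linv l)).
Proof.
move=> [[R s] P]; apply: val_inj => /=; congr pair.
case/andP: P => ly v; exact: stK (lyn_pos ly) v.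
Qed.

Lemma A0_bij a : bijective (A0st (a, true)).
Proof.
exists (A0st (a, false)); first exact: (A0stK (a, true)).
move=> t; have := A0stK (a, false) t; by rewrite /linv /=.
Qed.

Definition A0 : FnSet n := {| carrier := A0car; act := fun a => A0st (a, true); act_bij := A0_bij |}.

Lemma A0_ainv a (t : carrier A0) : ainv a t = A0st (a, false) t.
Proof.
apply: (@act_inj _ A0 a); rewrite ainvK /=.
have := A0stK (a, false) t; by rewrite /linv /=.
Qed.

Lemma mkA_proof R j : lynb d0 R -> A0pred (R, (j %% size R, [::])).
Proof. move=> ly; by rewrite /A0pred ly /validb /= ltn_pmod ?(lyn_pos ly). Qed.

Definition ptF : FnSet n := {| carrier := unit; act := fun _ x => x;
  act_bij := fun _ => Bijective (fun x : unit => erefl x) (fun x => erefl x) |}.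

End Std.

End Part2.
Import Part2.

Module Part3.

Definition om m (m0 : 0 < m) (j : nat) : 'I_m := Ordinal (ltn_pmod j m0).

Lemma om_val m (m0 : 0 < m) (i : 'I_m) : om m0 i = i.
Proof. apply: val_inj => /=; exact: modn_small. Qed.
Lemma om_S m (m0 : 0 < m) j : ordS (om m0 j) = om m0 j.+1.
Proof. apply: val_inj => /=; by rewrite -addn1 modnDml addn1. Qed.
Lemma om_add m (m0 : 0 < m) j : om m0 (m + j) = om m0 j.
Proof. apply: val_inj => /=; by rewrite modnDl. Qed.
Lemma om_mod m (m0 : 0 < m) j : om m0 (j %% m) = om m0 j.
Proof. apply: val_inj => /=; by rewrite modn_mod. Qed.

Lemma hom_walk n (Y : FnSet n) m (m0 : 0 < m) (phn : 'I_m -> carrier Y) (pha : 'I_m -> carrier Y * 'I_n) :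
  @is_ghom (cyc m) (Cay Y) phn pha ->
  (forall j, phn (om m0 j.+1) = act (pha (om m0 j)).2 (phn (om m0 j))) /\ (forall e, (pha e).1 = phn e).
Proof.
move=> h; split; last by move=> e; have [h1 _] := h e.
move=> j; have [h1 h2] := h (om m0 j); rewrite /= in h1 h2.
by rewrite -om_S -h2 h1.
Qed.

Lemma chain_dec (f : nat -> nat) m : (forall i, i < m -> f i.+1 <= f i) -> f m = f 0 ->
  forall i, i < m -> f i.+1 = f i.
Proof.
move=> h e.
have H : forall j, j <= m -> forall i, i <= j -> f j <= f i.
  elim=> [|j IH] jm i ij; first by move: ij; rewrite leqn0 => /eqP ->.
  case: (ltngtP i j.+1) ij => // [ij|->] _; last by [].
  apply: leq_trans (h j jm) (IH (ltnW jm) i _); lia.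
move=> i im; apply/eqP; rewrite eqn_leq (h i im) /=.
have a1 := H m (leqnn m) i.+1 im; have a2 := H i (ltnW im) 0 (leq0n _).
by rewrite -e in a2; apply: leq_trans a2 a1.
Qed.

Lemma chain_inc (f : nat -> nat) m : (forall i, i < m -> f i <= f i.+1) -> f m = f 0 ->
  forall i, i < m -> f i.+1 = f i.
Proof.
move=> h e.
have H : forall j, j <= m -> forall i, i <= j -> f i <= f j.
  elim=> [|j IH] jm i ij; first by move: ij; rewrite leqn0 => /eqP ->.
  case: (ltngtP i j.+1) ij => // [ij|->] _; last by [].
  apply: leq_trans (IH (ltnW jm) i _) (h j jm); lia.
move=> i im; apply/eqP; rewrite eqn_leq (h i im) andbT.
have a1 := H m (leqnn m) i.+1 im; have a2 := H i (ltnW im) 0 (leq0n _).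
by rewrite -e in a2; apply: leq_trans a1 a2.
Qed.

Section A0walk.
Variable n : nat.
Variable d0 : 'I_n.
Notation A0 := (A0 d0).
Notation wf := (wf d0).

Lemma A0_hom_fix m (m0 : 0 < m) (phn : 'I_m -> carrier A0) pha :
  @is_ghom (cyc m) (Cay A0) phn pha ->
  FixW d0 (fun j => (pha (om m0 j)).2) (sval (phn (om m0 0))).1 (sval (phn (om m0 0))).2.1 /\
  forall j, sval (phn (om m0 j)) = ((sval (phn (om m0 0))).1,
     (((sval (phn (om m0 0))).2.1 + j) %% size (sval (phn (om m0 0))).1, [::])).
Proof.
move=> hom; have [hw _] := hom_walk m0 hom.
set x := fun j => sval (phn (om m0 j)).
set W := fun j => (pha (om m0 j)).2.
have xS : forall j, x j.+1 = ((x j).1, st d0 (x j).1 (W j, true) (x j).2).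
  by move=> j; rewrite /x hw.
have xper : forall j, x (m + j) = x j by move=> j; rewrite /x om_add.
have Wper : forall j, W (m + j) = W j by move=> j; rewrite /W om_add.
set R := (x 0).1.
have xR : forall j, (x j).1 = R by elim=> // j IH; rewrite xS /= IH.
have P0 : A0pred d0 (x 0) by rewrite /x; case: (phn _).
case/andP: P0 => ly v0; rewrite -/R in ly.
have p0 := lyn_pos ly.
set s := fun j => (x j).2.
have sS : forall j, s j.+1 = st d0 R (W j, true) (s j) by move=> j; rewrite /s xS /= xR.
have xm : x m = x 0 by rewrite -(addn0 m) xper.
pose N j := ncount (s j).2.
have Ndec : forall i, i < m -> N i.+1 <= N i.
  move=> i _; rewrite /N sS [s i]surjective_pairing.
  case: (st_step d0 R (W i) (s i).1 (s i).2) => [[-> [_ ->]] //|[h|[h _]]]; [exact: ltnW|by rewrite h].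
have Nm : N m = N 0 by rewrite /N /s xm.
have Nc := chain_dec Ndec Nm.
pose Z j := size (s j).2.
have Zinc : forall i, i < m -> Z i <= Z i.+1.
  move=> i im; rewrite /Z sS [s i]surjective_pairing.
  case: (st_step d0 R (W i) (s i).1 (s i).2) => [[-> [_ ->]] //|[h|[_ ->]]] //.
  by have := Nc i im; rewrite /N sS [s i]surjective_pairing => E; rewrite E ltnn in h.
have Zm : Z m = Z 0 by rewrite /Z /s xm.
have Zc := chain_inc Zinc Zm.
have root : forall i, i < m -> (s i).2 = [::] /\ W i = wf R (s i).1 /\ s i.+1 = ((s i).1.+1 %% size R, [::]).
  move=> i im; rewrite sS [s i]surjective_pairing.
  case: (st_step d0 R (W i) (s i).1 (s i).2) => [[-> [-> ->]] //|[h|[_ h]]].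
    by have := Nc i im; rewrite /N sS [s i]surjective_pairing => E; rewrite E ltnn in h.
  by have := Zc i im; rewrite /Z sS [s i]surjective_pairing /= => E; move: h; rewrite /= E; lia.
set k := (x 0).2.1.
have kp : k < size R by case/and3P: v0.
have sform : forall j, j <= m -> s j = ((k + j) %% size R, [::]).
  elim=> [_|j IH jm]; first by rewrite addn0 modn_small // [s 0]surjective_pairing (proj1 (root 0 m0)).
  have [_ [_ ->]] := root j jm; rewrite IH ?(ltnW jm) //=.
  by rewrite -addn1 modnDml addn1 addnS.
have mp : m %% size R = 0.
  have := sform m (leqnn m); rewrite /s xm -/(s 0) (sform 0 (leq0n _)) addn0 modn_small // => [[]] E.
  have : k + m == k + 0 %[mod size R] by rewrite addn0 -E modn_small.
  by rewrite eqn_modDl mod0n => /eqP.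
have dv : size R %| m by rewrite /dvdn mp.
have xmod : forall j, x j = x (j %% m).
  move=> j; by rewrite /x om_mod.
have Wmod : forall j, W j = W (j %% m).
  move=> j; by rewrite /W om_mod.
have sall : forall j, s j = ((k + j) %% size R, [::]).
  move=> j; rewrite /s xmod -/(s (j %% m)) sform ?(ltnW (ltn_pmod _ m0)) //.
  congr pair; by rewrite -modnDmr (modn_dvdm j dv) modnDmr.
split.
  split=> //; split=> // j.
  rewrite -/(W j) Wmod (proj1 (proj2 (root _ (ltn_pmod j m0)))) sall.
  apply: wf_eqmod; rewrite modn_mod -modnDmr (modn_dvdm j dv) modnDmr //.
move=> j; rewrite -/(x j) [x j]surjective_pairing xR -/(s j) sall //.
Qed.

Lemma weq_A0 : @weq n A0 (ptF n) (fun _ => tt).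
Proof.
move=> m m0; split.
- move=> phn psn pha psa hp hs _ hE.
  have lab : forall e, (pha e).2 = (psa e).2 by move=> e; have := congr1 snd (hE e).
  have [f1 e1] := A0_hom_fix m0 hp; have [f2 e2] := A0_hom_fix m0 hs.
  have f2' : FixW d0 (fun j => (pha (om m0 j)).2) (sval (psn (om m0 0))).1 (sval (psn (om m0 0))).2.1.
    have eW : (fun j => (psa (om m0 j)).2) = (fun j => (pha (om m0 j)).2).
      by apply: functional_extensionality => j; rewrite lab.
    by rewrite -eW.
  have [eR ek] := fix_unique f1 f2'.
  have eq : forall v, phn v = psn v.
    move=> v; rewrite -(om_val m0 v); apply: val_inj; change (sval (phn (om m0 v)) = sval (psn (om m0 v))); by rewrite e1 e2 eR ek.
  split=> // e; have [_ h1] := hom_walk m0 hp; have [_ h2] := hom_walk m0 hs.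
  by rewrite [pha e]surjective_pairing [psa e]surjective_pairing h1 h2 lab eq.
- move=> chn cha hc.
  pose W j := (cha (om m0 j)).2.
  have Wper : hasper W m by move=> j; rewrite /W om_add.
  have [R [k fx]] := fix_exists d0 m0 Wper.
  have mp := fix_dvd m0 Wper fx.
  case: fx => [ly [kp hk]].
  pose phn (i : 'I_m) : carrier A0 := exist (A0pred d0) (R, ((k + i) %% size R, [::])) (mkA_proof (k + i) ly).
  exists phn, (fun i => (phn i, (cha i).2)); split; last split.
  + move=> e; split=> //=; apply: val_inj => /=; congr pair.
    have -> : (cha e).2 = wf R ((k + e) %% size R).
      have := hk e; rewrite /W om_val => ->; apply: wf_eqmod; by rewrite modn_mod.
    rewrite /st /= eqxx; congr pair.
    have dv : size R %| m by rewrite /dvdn mp.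
    rewrite -addn1 modnDml addn1 -addnS.
    by rewrite -[in RHS]modnDmr (modn_dvdm _ dv) modnDmr.
  + by move=> v; case: (chn v).
  + by move=> e; rewrite /Cay_arc /=; case: (cha e) => [[] a].
Qed.

End A0walk.

End Part3.
Import Part3.

Module Part4.

Lemma links_cay n (X : FnSet n) (e : arc (Cay X)) y z : links e y z ->
  (y = e.1 /\ z = act e.2 e.1) \/ (z = e.1 /\ y = act e.2 e.1).
Proof. by rewrite /links /=; case=> [[-> ->]|[-> ->]]; auto. Qed.

Lemma conn_inv n (X : FnSet n) (S : arc (Cay X) -> Prop) (P Q : carrier X -> Prop) :
  (forall y a, P y -> S (y, a) -> P (act a y)) -> (forall y a, P (act a y) -> S (y, a) -> P y) ->
  (forall y a, P y -> P (act a y) -> S (y, a) -> (Q y <-> Q (act a y))) ->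
  forall x z, connected S x z -> P x -> (P z /\ (Q x <-> Q z)).
Proof.
move=> h1 h2 h3 x z; elim=> [x'|x' y' z' e Se l _ IH] Px; first by split.
have [Py Qxy] : P y' /\ (Q x' <-> Q y').
  rewrite [e]surjective_pairing in Se.
  case: (links_cay l) => [[ex ey]|[ex ey]]; subst x' y'.
    split; [exact: h1|]; apply: h3 => //; exact: h1.
  have Pz := h2 _ _ Px Se; split=> //; symmetry; exact: h3.
have [Pz Qyz] := IH Py; split=> //; by rewrite Qxy.
Qed.

Lemma sig_eq (T : Type) (P : T -> Prop) (x y : {t | P t}) : sval x = sval y -> x = y.
Proof. case: x => x px; case: y => y py /= e; subst y; by rewrite (proof_irrelevance _ px py). Qed.

Lemma cof_lift n (X : FnSet n) : cofibrant X -> forall (A B : FnSet n) (q : carrier A -> carrier B),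
  equivariant q -> weq q -> forall v : carrier X -> carrier B, equivariant v ->
  exists h : carrier X -> carrier A, equivariant h /\ forall y, q (h y) = v y.
Proof.
move=> cof A B q qe qw v ve.
have [h [he [_ hq]]] := cof A B q qe qw (fun e : Empty_set => match e with end) v
  (fun a e => match e with end) ve (fun e => match e with end).
by exists h.
Qed.

Section Complement.
Variables (n : nat) (X : FnSet n) (x0 : carrier X).
Definition Kc (y : carrier X) := connected (fun _ : arc (Cay X) => True) x0 y.

Lemma Kc_act a y : Kc y -> Kc (act a y).
Proof. move=> h; apply: (conn_trans h); apply: (@conn1 (Cay X) _ (y, a)) => //; by left. Qed.
Lemma Kc_act_inv a y : Kc (act a y) -> Kc y.
Proof. move=> h; apply: (conn_trans h); apply: (@conn1 (Cay X) _ (y, a)) => //; by right. Qed.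
Lemma Kc_links (e : arc (Cay X)) (y z : carrier X) : links e y z -> Kc y -> Kc z.
Proof. move=> l h; apply: (conn_trans h); exact: (@conn1 (Cay X) _ e). Qed.

Definition ccar := {y : carrier X | ~ Kc y}.
Definition cact a (y : ccar) : ccar :=
  exist (fun z => ~ Kc z) (act a (sval y)) (fun h => proj2_sig y (@Kc_act_inv a (sval y) h)).
Lemma cinv_proof a (y : ccar) : ~ Kc (ainv a (sval y)).
Proof. move=> h; apply: (proj2_sig y); rewrite -(ainvK a (sval y)); exact: Kc_act. Qed.
Definition cinv a (y : ccar) : ccar := exist (fun z => ~ Kc z) (ainv a (sval y)) (@cinv_proof a y).
Lemma cact_bij a : bijective (cact a).
Proof.
exists (cinv a) => y; apply: sig_eq => /=; by rewrite ?actK ?ainvK.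
Qed.
Definition Compl : FnSet n := {| carrier := ccar; act := cact; act_bij := cact_bij |}.

Lemma compl_weq : (forall m (m0 : 0 < m) (phn : 'I_m -> carrier X) pha,
   @is_ghom (cyc m) (Cay X) phn pha -> forall i, ~ Kc (phn i)) ->
  @weq n Compl X (fun y => sval y).
Proof.
move=> noc m m0; split.
- move=> phn psn pha psa _ _ hv he.
  have e1 : forall v, phn v = psn v by move=> v; apply: sig_eq; exact: hv.
  split=> // e; have := he e; rewrite /Cay_arc /= => [[h1 h2]].
  by rewrite [pha e]surjective_pairing [psa e]surjective_pairing h2 (sig_eq h1).
- move=> chn cha hc.
  exists (fun i => exist (fun z => ~ Kc z) (chn i) (noc m m0 chn cha hc i) : carrier Compl).
  exists (fun i => (exist (fun z => ~ Kc z) (chn i) (noc m m0 chn cha hc i) : carrier Compl, (cha i).2)).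
  split; last split => //.
    move=> e; split=> //=; apply: sig_eq => /=.
    have [h1 h2] := hc e; rewrite /= in h1 h2; by rewrite -h2 h1.
  move=> e; rewrite /Cay_arc /=; have [h1 _] := hc e; rewrite /= in h1.
  by rewrite -h1 -surjective_pairing.
Qed.

Lemma cyc_in_K : cofibrant X -> exists m (m0 : 0 < m) (phn : 'I_m -> carrier X) pha,
  @is_ghom (cyc m) (Cay X) phn pha /\ exists i, Kc (phn i).
Proof.
move=> cof; apply: NNPP => hno.
have noc : forall m (m0 : 0 < m) (phn : 'I_m -> carrier X) pha,
   @is_ghom (cyc m) (Cay X) phn pha -> forall i, ~ Kc (phn i).
  move=> m m0 phn pha h i Ki; apply: hno; exists m, m0, phn, pha; split=> //; by exists i.
have qe : equivariant (fun y : carrier Compl => sval y) by [].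
have [h [_ hq]] := cof_lift cof qe (compl_weq noc) (v := id) (fun a x => erefl).
have := proj2_sig (h x0); rewrite hq; apply; exact: conn_refl.
Qed.

End Complement.

End Part4.
Import Part4.

Module Part5.

Lemma argmax_nat (f : nat -> nat) M : 0 < M -> exists i0, i0 < M /\ forall i, i < M -> f i <= f i0.
Proof.
elim: M => // M IH _; case: (posnP M) => [->|Mp].
  by exists 0; split=> // i; rewrite ltnS leqn0 => /eqP ->.
have [i0 [i0M h]] := IH Mp; case: (leqP (f M) (f i0)) => hM.
  exists i0; split; first lia.
  move=> i; rewrite ltnS leq_eqVlt => /orP [/eqP ->|]; [exact: hM|exact: h].
exists M; split=> // i; rewrite ltnS leq_eqVlt => /orP [/eqP ->|iM] //.
exact: leq_trans (h i iM) (ltnW hM).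
Qed.

Section Forward.
Variables (n : nat) (X : FnSet n) (d0 : 'I_n).
Notation A0 := (A0 d0).
Notation wf := (wf d0).
Variable g : carrier X -> carrier A0.
Hypothesis geq : equivariant g.
Variable x0 : carrier X.
Notation K := (Kc x0).
Variables (R : seq 'I_n) (k : nat) (x1 : carrier X).
Hypotheses (ly : lynb d0 R) (kp : k < size R) (Kx1 : K x1) (gx1 : sval (g x1) = (R, (k, [::]))).
Fixpoint xw t := if t is t'.+1 then act (wf R (k + t')) (xw t') else x1.
Variable m : nat.
Hypotheses (m0 : 0 < m) (xm : xw m = x1).

Lemma p0 : 0 < size R. Proof. exact: lyn_pos ly. Qed.

Lemma gact a y : sval (g (act a y)) = ((sval (g y)).1, st d0 (sval (g y)).1 (a, true) (sval (g y)).2).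
Proof. by rewrite geq. Qed.

Lemma gainv a y : sval (g (ainv a y)) = ((sval (g y)).1, st d0 (sval (g y)).1 (a, false) (sval (g y)).2).
Proof. by rewrite (equiv_ainv geq) A0_ainv. Qed.

Lemma gxw t : sval (g (xw t)) = (R, ((k + t) %% size R, [::])).
Proof.
elim: t => [|t IH]; first by rewrite /= gx1 addn0 modn_small.
rewrite /= gact IH /= /st /=.
have -> : wf R ((k + t) %% size R) = wf R (k + t) by apply: wf_eqmod; rewrite modn_mod.
rewrite eqxx; congr pair; congr pair.
by rewrite -addn1 modnDml addn1 addnS.
Qed.

Definition Tc := minnat (fun t => 0 < t /\ xw t = x1).

Lemma T_spec : (0 < Tc /\ xw Tc = x1) /\ forall t, 0 < t /\ xw t = x1 -> Tc <= t.
Proof. apply: minnat_spec; by exists m. Qed.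

Lemma T0 : 0 < Tc. Proof. by case: T_spec => [[]]. Qed.
Lemma xT : xw Tc = x1. Proof. by case: T_spec => [[]]. Qed.

Lemma T_dvd : Tc %% size R = 0.
Proof.
have := gxw Tc; rewrite xT gx1 => [[E]].
have : k + Tc == k + 0 %[mod size R] by rewrite addn0 -E modn_small.
by rewrite eqn_modDl mod0n => /eqP.
Qed.

Lemma xw_per : hasper xw Tc.
Proof.
elim=> [|t IH]; first by rewrite addn0 xT.
rewrite addnS /= IH; congr act; apply: wf_eqmod.
by rewrite addnCA -modnDml T_dvd add0n.
Qed.

Lemma xw_mod t : xw t = xw (t %% Tc).
Proof. exact: (per_modv xw_per T0). Qed.

Lemma ht_xw t : size (sval (g (xw t))).2.2 = 0.
Proof. by rewrite gxw. Qed.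

Lemma xw_desc s r : xw (s + r) = xw s -> xw r = x1.
Proof.
elim: s => [|s IH]; first by rewrite add0n.
move=> H; apply: IH.
have E : (k + (s + r).+1) %% size R = (k + s.+1) %% size R.
  by have := congr1 (fun z => (sval (g z)).2.1) H; rewrite addSn !gxw.
have E' : wf R (k + (s + r)) = wf R (k + s).
  apply: wf_eqmod; rewrite !addnS -[(k + (s + r)).+1]addn1 -[(k + s).+1]addn1 in E; apply/eqP; rewrite -(eqn_modDr 1); exact/eqP.
move: H; rewrite addSn /= E'; exact: act_inj.
Qed.

Lemma xw_inj s t : s < Tc -> t < Tc -> xw s = xw t -> s = t.
Proof.
wlog st : s t / s <= t.
  move=> hw sT tT e; case: (leqP s t) => h; first exact: hw.
  symmetry; apply: hw => //; exact: ltnW.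
move=> sT tT e; case: (ltngtP s t) st => // lt _.
have := @xw_desc s (t - s); rewrite subnKC ?(ltnW lt) // -e => /(_ erefl) h.
have [_ hmin] := T_spec; have := hmin (t - s); rewrite subn_gt0 lt => /(_ (conj erefl h)).
lia.
Qed.

Definition phc (t : 'I_Tc) : carrier X := xw t.
Definition pac (t : 'I_Tc) : carrier X * 'I_n := (xw t, wf R (k + t)).

Lemma phc_hom : @is_ghom (cyc Tc) (Cay X) phc pac.
Proof. move=> e; split=> //=; by rewrite /phc -(xw_mod e.+1). Qed.

Lemma phc_inj : injective phc.
Proof. move=> s t e; apply: val_inj; exact: xw_inj (ltn_ord s) (ltn_ord t) e. Qed.

Lemma pac_inj : injective pac.
Proof. move=> s t e; apply: phc_inj; exact: (congr1 fst e). Qed.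

Lemma K_xw t : K (xw t).
Proof. elim: t => // t IH; exact: Kc_act. Qed.

Definition ht y := size (sval (g y)).2.2.
Definition par y := match (sval (g y)).2.2 with
  | (a, true) :: _ => ainv a y | (a, false) :: _ => act a y | [::] => y end.
Definition parc y : carrier X * 'I_n := match (sval (g y)).2.2 with
  | (a, true) :: _ => (ainv a y, a) | (a, false) :: _ => (y, a) | [::] => (y, d0) end.

Lemma par_spec y : 0 < ht y -> ht (par y) = (ht y).-1 /\ @links (Cay X) (parc y) y (par y).
Proof.
rewrite /ht /par /parc; case E: (sval (g y)).2.2 => [|[a b] u] //= _.
case: b E => E.
  rewrite gainv /st /= E /= /linv /= eqxx /=; split=> //; right; by rewrite /= ainvK.
rewrite gact /st /= E /= /linv /= eqxx /=; split=> //; by left.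
Qed.

Lemma classify y a :
  ((sval (g y)).2.2 = [::] /\ a = wf (sval (g y)).1 (sval (g y)).2.1) \/
  (ht (act a y) = (ht y).+1 /\ par (act a y) = y /\ parc (act a y) = (y, a)) \/
  (ht y = (ht (act a y)).+1 /\ par y = act a y /\ parc y = (y, a)).
Proof.
rewrite /ht /par /parc gact; case E: (sval (g y)).2.2 => [|[b c] u].
- rewrite /st /= E /=; case: eqP => [[->]|N]; first by left.
  case: eqP => [Eb|_]; first congruence.
  by right; left; rewrite /= actK.
- rewrite /st /= E /=; case: eqP => [El|Nl].
    case: El => -> ->; by right; right.
  by right; left; rewrite /= actK.
Qed.

Lemma gR y : K y -> (sval (g y)).1 = R.
Proof.
have inv : forall x z, connected (fun _ : arc (Cay X) => True) x z ->
    (fun _ => True) x -> (True /\ ((sval (g x)).1 = R <-> (sval (g z)).1 = R)).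
  apply: conn_inv => // y' a _ _ _; by rewrite gact.
move=> Ky; have [_ h1] := inv _ _ Ky I; have [_ h2] := inv _ _ Kx1 I.
by apply/h1/h2; rewrite gx1.
Qed.

Definition rho y := iter (ht y) par y.

Lemma rho_par y : 0 < ht y -> rho (par y) = rho y.
Proof.
move=> h; rewrite /rho (proj1 (par_spec h)).
by case: (ht y) h => // t _; rewrite iterSr.
Qed.

Lemma rho_root y : ht y = 0 -> rho y = y.
Proof. by rewrite /rho => ->. Qed.

Definition Qc y := exists t, rho y = xw t.

Lemma Q_step y a : K y -> (Qc y <-> Qc (act a y)).
Proof.
move=> Ky; case: (classify y a) => [[E ea]|[[h1 [h2 _]]|[h1 [h2 _]]]].
- have hy : ht y = 0 by rewrite /ht E.
  have gay : sval (g (act a y)) = (R, ((sval (g y)).2.1.+1 %% size R, [::])).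
    rewrite gact [(sval (g y)).2]surjective_pairing E gR // /st /= -(gR Ky) -ea eqxx.
    by rewrite (gR Ky).
  have hay : ht (act a y) = 0 by rewrite /ht gay.
  rewrite /Qc rho_root // rho_root //; split=> [[t yt]|[t yt]].
    exists t.+1 => /=; rewrite -yt; congr act.
    have := gxw t; rewrite -yt => gy; rewrite ea gy /=.
    apply: wf_eqmod; by rewrite modn_mod.
  exists (t + Tc).-1; apply: (@act_inj _ _ a); rewrite yt.
  have e1 : xw t = xw (t + Tc).-1.+1 by rewrite prednK ?addn_gt0 ?T0 ?orbT // addnC xw_per.
  rewrite e1 /=; congr act.
  rewrite ea (gR Ky); apply: wf_eqmod.
  have := gxw t; rewrite -yt gay => [[E2]].
  apply/eqP; rewrite -(eqn_modDr 1) !addn1 -addnS prednK ?addn_gt0 ?T0 ?orbT //.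
  by rewrite E2 addnA -modnDmr T_dvd addn0.
- have hp : 0 < ht (act a y) by rewrite h1.
  by rewrite /Qc -(rho_par hp) h2.
- have hp : 0 < ht y by rewrite h1.
  by rewrite /Qc -(rho_par hp) h2.
Qed.

Lemma Q_K y : K y -> Qc y.
Proof.
have inv := @conn_inv n X (fun _ => True) K Qc (fun y a Ky _ => Kc_act a Ky)
  (fun y a Ky _ => Kc_act_inv Ky) (fun y a Ky _ _ => Q_step a Ky).
move=> Ky; have [_ h1] := inv _ _ Ky (conn_refl _ _).
have [_ h2] := inv _ _ Kx1 (conn_refl _ _).
apply/h1/h2; exists 0; rewrite rho_root //; by rewrite /ht gx1.
Qed.

Definition Sf (e : arc (Cay X)) := K (src e) /\ ~ (exists t : 'I_Tc, pac t = e).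

Lemma S_nonroot y a : Sf (y, a) -> ~ ((sval (g y)).2.2 = [::] /\ a = wf (sval (g y)).1 (sval (g y)).2.1).
Proof.
move=> [Ky hn] [E ea]; apply: hn.
have [t yt] := Q_K Ky; rewrite rho_root ?/ht ?E // in yt.
exists (om T0 t); rewrite /pac /= -xw_mod -yt ea; congr pair.
have := gxw t; rewrite -yt => ->; apply: wf_eqmod; rewrite /=.
have dv : size R %| Tc by rewrite /dvdn T_dvd.
by rewrite modn_mod -modnDmr (modn_dvdm _ dv) modnDmr.
Qed.

Lemma S_tree (e : arc (Cay X)) v v' : Sf e -> links e v v' ->
  (ht v' = (ht v).+1 /\ parc v' = e /\ par v' = v) \/ (ht v = (ht v').+1 /\ parc v = e /\ par v = v').
Proof.
case: e => y a Se l; have hn := S_nonroot Se.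
case: (links_cay l) => /= [[-> ->]|[-> ->]]; case: (classify y a) => [//|[[h1 [h2 h3]]|[h1 [h2 h3]]]].
- by left.
- by right.
- by right.
- by left.
Qed.

Lemma no_cycle : ~ has_cycle Sf.
Proof.
move=> [M [v [e [M0 [vM [hE hd]]]]]].
have [i0 [i0M hmax]] := argmax_nat (fun i => ht (v i)) M0.
have hle : forall i, i <= M -> ht (v i) <= ht (v i0).
  move=> i; rewrite leq_eqVlt => /orP [/eqP ->|iM]; last exact: hmax.
  by rewrite vM; apply: hmax.
have [Se1 l1] := hE i0 i0M.
have par1 : parc (v i0) = e i0.
  case: (S_tree Se1 l1) => [[h _]|[_ [-> _]]] //.
  by have := hle i0.+1 i0M; rewrite h ltnn.
have [h1 _] : ht (v i0) = (ht (v i0.+1)).+1 /\ True.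
  case: (S_tree Se1 l1) => [[h _]|[h _]] //.
  by have := hle i0.+1 i0M; rewrite h ltnn.
have M2 : 1 < M.
  case: (ltngtP M 1) => // M1; first lia.
  subst M; have i00 : i0 = 0 by lia.
  subst i0; move: h1; rewrite vM; lia.
have [j [jM [vj ij]]] : exists j, j < M /\ v j.+1 = v i0 /\ i0 <> j.
  case: i0 i0M {hmax hle Se1 l1 par1 h1} => [|i] iM.
    exists M.-1; split; first lia; split; last lia.
    by rewrite prednK ?vM //; lia.
  exists i; split; first lia; split=> //; lia.
have [Se2 l2] := hE j jM; rewrite vj in l2.
have par2 : parc (v i0) = e j.
  case: (S_tree Se2 l2) => [[_ [-> _]]|[h _]] //.
  by have := hle j (ltnW jM); rewrite h ltnn.
case: (ltngtP i0 j) => [lt|lt|eq] //.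
- by have [hne _] := hd _ _ lt jM; apply: hne; rewrite -par1 par2.
- by have [hne _] := hd _ _ lt i0M; apply: hne; rewrite -par2 par1.
Qed.

Lemma parc_S y : K y -> 0 < ht y -> Sf (parc y).
Proof.
move=> Ky hy; have [_ l] := par_spec hy; split.
  have Kp : K (par y) := Kc_links l Ky.
  by case: (l) => [[-> _]|[-> _]].
move=> [t et]; have [ha hb] := phc_hom t.
move: l; rewrite -et /links ha hb => l.
have : ht y = 0.
  case: l => [[<- _]|[_ <-]]; rewrite /ht ?ht_xw //; exact: ht_xw.
lia.
Qed.

Lemma conn_rho y : K y -> connected Sf y (rho y).
Proof.
move: {2}(ht y) (erefl (ht y)) => h; elim: h y => [|h IH] y hy Ky.
  rewrite rho_root //; exact: conn_refl.
have hp : 0 < ht y by rewrite hy.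
have [hpar l] := par_spec hp.
apply: (conn_step (parc_S Ky hp) l); rewrite -(rho_par hp); apply: IH.
  by rewrite hpar hy.
exact: Kc_links l Ky.
Qed.

Lemma S_rho y z : connected Sf y z -> rho y = rho z.
Proof.
elim=> // x y' z' e Se l _ IH; rewrite -IH.
case: (S_tree Se l) => [[h1 [_ h3]]|[h1 [_ h3]]].
  have hp : 0 < ht y' by rewrite h1.
  by rewrite -(rho_par hp) h3.
have hp : 0 < ht x by rewrite h1.
by rewrite -(rho_par hp) h3.
Qed.

Lemma forward_body :
  exists (p : nat) (phn : node (cyc p) -> node (Cay X)) (pha : arc (cyc p) -> arc (Cay X)),
      0 < p /\ is_ghom phn pha /\ injective phn /\ injective pha /\
      (forall k, K (phn k)) /\
      let S := fun e : arc (Cay X) => K (src e) /\ ~ (exists k, pha k = e) in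
      ~ @has_cycle (Cay X) S /\
      (forall y, K y -> exists k, @connected (Cay X) S y (phn k) /\
                          forall k', @connected (Cay X) S y (phn k') -> phn k' = phn k).
Proof.
exists Tc, phc, pac; split; first exact: T0.
split; first exact: phc_hom.
split; first exact: phc_inj.
split; first exact: pac_inj.
split; first by move=> t; exact: K_xw.
split; first exact: no_cycle.
move=> y Ky; have [t yt] := Q_K Ky.
exists (om T0 t); split.
  by rewrite /phc /= -xw_mod -yt; exact: conn_rho.
move=> t' c; have := S_rho c; rewrite [rho (phc t')]rho_root; last exact: ht_xw.
by rewrite yt /phc /= -xw_mod => ->.
Qed.

End Forward.

End Part5.
Import Part5.

Module Part6.

Section Backward.
Variables (n : nat) (X : FnSet n) (x0 : carrier X).
Notation K := (Kc x0).
Variables (p : nat) (phn : 'I_p -> carrier X) (pha : 'I_p -> carrier X * 'I_n).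
Definition Sb (e : arc (Cay X)) := K (src e) /\ ~ (exists k, pha k = e).
Hypotheses (H0 : 0 < p) (Hhom : @is_ghom (cyc p) (Cay X) phn pha) (Hinj : injective phn)
  (HK : forall k, K (phn k)) (Hnoc : ~ has_cycle Sb)
  (Hroot : forall y, K y -> exists k, connected Sb y (phn k) /\
              forall k', connected Sb y (phn k') -> phn k' = phn k).

Lemma Sb_K (e : arc (Cay X)) y z : Sb e -> links e y z -> K y /\ K z.
Proof.
move=> [Ks _] l; have Kt : K (tgt e) by apply: Kc_act.
by case: l => [[<- <-]|[<- <-]].
Qed.

Inductive rch : carrier X -> nat -> Prop :=
| rch0 k : rch (phn k) 0
| rchS y z (e : arc (Cay X)) t : Sb e -> links e y z -> rch z t -> rch y t.+1.

Lemma rch_ex y : K y -> exists t, rch y t.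
Proof.
move=> Ky; have [k [c _]] := Hroot Ky.
have : exists t, rch (phn k) t by exists 0; exact: rch0.
elim: c => // x y' z e Se l _ IH /IH [t r]; exists t.+1; exact: rchS Se l r.
Qed.

Definition d y := minnat (rch y).

Lemma d_spec y : K y -> rch y (d y) /\ forall t, rch y t -> d y <= t.
Proof. move=> Ky; exact: minnat_spec (rch_ex Ky). Qed.

Lemma d_phn k : d (phn k) = 0.
Proof. have [_ h] := d_spec (HK k); have := h 0 (rch0 k); lia. Qed.

Lemma d0_inv y : K y -> d y = 0 -> exists k, y = phn k.
Proof.
move=> Ky e; have [r _] := d_spec Ky; rewrite e in r.
inversion r; by exists k.
Qed.

Lemma d_lip (e : arc (Cay X)) y z : Sb e -> links e y z -> d y <= (d z).+1.
Proof.
move=> Se l; have [Ky Kz] := Sb_K Se l.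
have [rz _] := d_spec Kz; have [_ h] := d_spec Ky; exact: h _ (rchS Se l rz).
Qed.

Lemma dstep y t : K y -> d y = t.+1 -> exists (e : arc (Cay X)) z, Sb e /\ links e y z /\ d z = t.
Proof.
move=> Ky e; have [r _] := d_spec Ky; rewrite e in r.
inversion r as [|y' z e0 t' S1 l1 r1 E1 E2]; subst.
exists e0, z; split=> //; split=> //.
have [_ Kz] := Sb_K S1 l1.
have [_ h] := d_spec Kz; have := h _ r1; have := d_lip S1 l1; lia.
Qed.

Definition arcof y (l : 'I_n * bool) : carrier X * 'I_n := if l.2 then (ainv l.1 y, l.1) else (y, l.1).
Definition endof y (l : 'I_n * bool) : carrier X := if l.2 then ainv l.1 y else act l.1 y.

Lemma links_arcof y l : @links (Cay X) (arcof y l) y (endof y l).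
Proof. rewrite /links /arcof /endof; case: l => a [] /=; [right|left] => //; by rewrite ainvK. Qed.

Definition lab y := pickopt (fun l => Sb (arcof y l) /\ d (endof y l) = (d y).-1).

Lemma lab_spec y : K y -> 0 < d y -> exists l, lab y = Some l /\ Sb (arcof y l) /\ d (endof y l) = (d y).-1.
Proof.
move=> Ky dp; rewrite /lab; apply: pickoptP.
have [e [z [Se [l dz]]]] := dstep Ky (esym (prednK dp)).
case: e Se l => w a Se l; case: (links_cay l) => /= [[ey ez]|[ez ey]]; subst.
  exists (a, false); by rewrite /arcof /endof /=.
exists (a, true); by rewrite /arcof /endof /= actK.
Qed.

Lemma lab_some y l : lab y = Some l -> Sb (arcof y l) /\ d (endof y l) = (d y).-1.
Proof. exact: pickoptS. Qed.

Definition par y := if lab y is Some l then endof y l else y.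
Definition desc i y := iter i par y.

Lemma par_spec y : K y -> 0 < d y -> exists l, lab y = Some l /\ Sb (arcof y l) /\
  @links (Cay X) (arcof y l) y (par y) /\ K (par y) /\ d (par y) = (d y).-1.
Proof.
move=> Ky dp; have [l [e [S1 d1]]] := lab_spec Ky dp.
exists l; rewrite /par e; split=> //; split=> //; split; first exact: links_arcof.
split=> //; exact: (proj2 (Sb_K S1 (links_arcof y l))).
Qed.

Lemma desc_spec y i : K y -> i <= d y -> K (desc i y) /\ d (desc i y) = d y - i.
Proof.
move=> Ky; elim: i => [|i IH] hi; first by rewrite subn0.
have [K1 d1] := IH (ltnW hi); rewrite /desc iterS -/(desc i y).
have [_ [_ [_ [_ [K2 d2]]]]] := par_spec K1 ltac:(rewrite d1; lia).
split=> //; rewrite d2 d1; lia.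
Qed.

Lemma conn_desc y i : K y -> i <= d y -> connected Sb y (desc i y).
Proof.
move=> Ky; elim: i => [|i IH] hi; first exact: conn_refl.
have [K1 d1] := desc_spec Ky (ltnW hi).
have [l [_ [S1 [l1 _]]]] := par_spec K1 ltac:(rewrite d1; lia).
apply: conn_trans (IH (ltnW hi)) _; rewrite /desc iterS -/(desc i y).
exact: conn1 S1 l1.
Qed.

Lemma desc_root y : K y -> exists k, desc (d y) y = phn k.
Proof.
move=> Ky; have [K1 d1] := desc_spec Ky (leqnn _).
apply: d0_inv K1 _; by rewrite d1 subnn.
Qed.

Lemma meet a b : K a -> K b -> d a = d b -> connected Sb a b ->
  exists j, j <= d a /\ desc j a = desc j b /\ forall i, i < j -> desc i a <> desc i b.
Proof.
move=> Ka Kb dab c.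
have ex : exists j, j <= d a /\ desc j a = desc j b.
  exists (d a); split=> //.
  have [k0 [_ u]] := Hroot Ka.
  have [ka ea] := desc_root Ka; have [kb eb] := desc_root Kb.
  have c1 : connected Sb a (phn ka) by rewrite -ea; exact: conn_desc.
  have c2 : connected Sb a (phn kb) by rewrite -eb; apply: conn_trans c _; exact: conn_desc.
  rewrite -dab in eb; rewrite ea eb (u ka c1) (u kb c2) //.
have [j [[jd ej] hmin]] := least_ex ex.
exists j; split=> //; split=> // i ij e; have := hmin i (conj (leq_trans (ltnW ij) jd) e); lia.
Qed.

Definition parcd (dflt : arc (Cay X)) y : arc (Cay X) := if lab y is Some l then arcof y l else dflt.

Lemma parcd_spec dflt y : K y -> 0 < d y -> Sb (parcd dflt y) /\ links (parcd dflt y) y (par y).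
Proof.
move=> Ky dp; have [l [e [S1 [l1 _]]]] := par_spec Ky dp; by rewrite /parcd e.
Qed.

Lemma vcycle a b (dflt : arc (Cay X)) L (C : nat -> carrier X) (F : nat -> arc (Cay X)) :
  K a -> K b -> d a = d b -> a <> b -> connected Sb a b -> 0 < L -> C 0 = b -> C L = a ->
  (forall i, i < L -> Sb (F i) /\ links (F i) (C i) (C i.+1)) ->
  (forall i, 0 < i -> i < L -> d a < d (C i)) ->
  (forall i i', 0 < i -> i < i' -> i' < L -> C i <> C i') -> has_cycle Sb.
Proof.
move=> Ka Kb dab nab c L0 C0 CL hF hCd hCdist.
have [j [jd [mj nm]]] := meet Ka Kb dab c.
have j0 : 0 < j by case: j jd mj nm => // _ e; exfalso; exact: nab e.
pose P i := if i <= j then desc i a else desc (j + j - i) b.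
pose E i := if i < j then parcd dflt (desc i a) else parcd dflt (desc (j + j - i.+1) b).
pose Q i := if i <= j + j then P i else C (i - (j + j)).
pose E' i := if i < j + j then E i else F (i - (j + j)).
have dPa : forall i, i <= j -> d (desc i a) = d a - i /\ K (desc i a).
  move=> i ij; have [h1 h2] := desc_spec Ka (leq_trans ij jd); by split.
have dPb : forall i, i <= j -> d (desc i b) = d a - i /\ K (desc i b).
  move=> i ij; have jdb : j <= d b by rewrite -dab.
  have [h2 h1] := desc_spec Kb (leq_trans ij jdb); rewrite -dab in h1; by split.
have Pj : forall i, j <= i -> i <= j + j -> P i = desc (j + j - i) b.
  move=> i h1 h2; rewrite /P; case: leqP => // h3.
  have -> : i = j by lia.
  by rewrite mj; congr desc; lia.
have dP : forall i, i <= j + j -> d (P i) <= d a.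
  move=> i h; case: (leqP i j) => h'.
    rewrite /P h' (proj1 (dPa i h')); lia.
  rewrite Pj ?(ltnW h') // (proj1 (dPb _ _)); lia.
have Pdist : forall i i', i < i' -> i' <= j + j -> P i <> P i'.
  move=> i i' ii' i'j e.
  case: (leqP i' j) => h1.
    have h0 : i <= j by lia.
    move: e; rewrite /P h1 h0 => e.
    have := congr1 d e; rewrite (proj1 (dPa i h0)) (proj1 (dPa i' h1)); lia.
  case: (leqP j i) => h2.
    have e1 : P i = desc (j + j - i) b by apply: Pj; lia.
    have e2 : P i' = desc (j + j - i') b by apply: Pj; lia.
    move: e; rewrite e1 e2 => e.
    have := congr1 d e; rewrite (proj1 (dPb (j + j - i) _)) ?(proj1 (dPb (j + j - i') _)); lia.
  have e1 : P i = desc i a by rewrite /P (ltnW h2).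
  have e2 : P i' = desc (j + j - i') b by apply: Pj; lia.
  move: e; rewrite e1 e2 => e.
  have := congr1 d e; rewrite (proj1 (dPa i _)) ?(proj1 (dPb (j + j - i') _)); try lia.
  move=> de; have ei : j + j - i' = i by lia.
  apply: (nm i h2); by rewrite e ei.
apply: (@mk_cycle (Cay X) Sb (j + j + L) Q E').
- lia.
- rewrite /Q ifN; last lia.
  rewrite -[j + j + L - (j + j)]/(j + j + L - (j + j)) addKn CL /Q leq0n /P leq0n //.
- move=> i iM; rewrite /Q /E'.
  case: (ltnP i (j + j)) => h1.
    rewrite (ltnW h1).
    case: (ltnP i j) => h3.
      rewrite /E h3 /P (ltnW h3) h3.
      have [dd KK] := dPa i (ltnW h3).
      have := parcd_spec dflt KK ltac:(rewrite dd; lia); by rewrite /desc iterS.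
    have e1 : P i = desc (j + j - i) b by apply: Pj; lia.
    have e2 : P i.+1 = desc (j + j - i.+1) b by apply: Pj; lia.
    rewrite e1 e2 /E ltnNge h3 /=.
    have [dd KK] := dPb (j + j - i.+1) ltac:(lia).
    have [S1 l1] := parcd_spec dflt KK ltac:(rewrite dd; lia).
    split=> //; apply: links_sym; move: l1; rewrite /desc -iterS.
    have -> : (j + j - i.+1).+1 = j + j - i by lia.
    by [].
  case: (leqP i (j + j)) => h2.
    have ei : i = j + j by lia.
    subst i; rewrite subSnn subnn.
    have [S1 l1] := hF 0 L0; split=> //.
    have eb : P (j + j) = b by rewrite Pj ?subnn //; lia.
    by rewrite eb -C0.
  rewrite subSn ?(ltnW h2) //.
  apply: hF; lia.
- move=> i i' ii' i'M e; move: e; rewrite /Q.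
  case: (leqP i' (j + j)) => h1.
    rewrite (ltnW (leq_trans ii' h1)); exact: Pdist.
  case: (leqP i (j + j)) => h2.
    move=> e; have := dP i h2; rewrite e; have := hCd (i' - (j + j)); lia.
  apply: hCdist; lia.
- lia.
Qed.


Lemma A_neq (e : arc (Cay X)) y z : Sb e -> links e y z -> d y <> d z.
Proof.
move=> Se l dyz; have [Ky Kz] := Sb_K Se l.
case: (classic (y = z)) => [yz|nyz].
  subst z; apply: Hnoc; apply: (@mk_cycle (Cay X) Sb 1 (fun _ => y) (fun _ => e)) => //; move=> *; lia.
apply: Hnoc; apply: (@vcycle y z e 1 (fun i => if i == 0 then z else y) (fun _ => e)) => //.
- exact: conn1 Se l.
- move=> i; rewrite ltnS leqn0 => /eqP -> /=; split=> //; exact: links_sym.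
all: move=> *; lia.
Qed.

Lemma B_eq (e : arc (Cay X)) y z l : K y -> 0 < d y -> Sb e -> links e y z -> d z = (d y).-1 ->
  lab y = Some l -> e = arcof y l.
Proof.
move=> Ky dp Se le dz el; apply: NNPP => ne.
have [S2 d2] := lab_some el; have l2 := links_arcof y l.
have [_ Kz] := Sb_K Se le; have [_ Kz2] := Sb_K S2 l2.
case: (classic (z = endof y l)) => [zz|nzz].
  apply: Hnoc.
  apply: (@mk_cycle (Cay X) Sb 2 (fun i => if i == 1 then z else y) (fun i => if i == 0 then e else arcof y l)) => //.
  - move=> [|[|i]] hi /=; [by split|split=> //|lia].
    rewrite zz; exact: links_sym.
  - move=> i j ij j2; have -> : i = 0 by lia.
    have -> : j = 1 by lia.
    move=> /= yz; move: dz; rewrite -yz; lia.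
apply: Hnoc; apply: (@vcycle z (endof y l) e 2 (fun i => if i == 0 then endof y l else if i == 1 then y else z)
                   (fun i => if i == 0 then arcof y l else e)) => //.
- by rewrite dz d2.
- exact: conn_trans (conn1 Se (links_sym le)) (conn1 S2 l2).
- move=> [|[|i]] hi /=; [split=> //; exact: links_sym|by split|lia].
- move=> i i0 i2; have -> : i = 1 by lia.
  rewrite /= dz; lia.
all: move=> *; lia.
Qed.

Variables (A B : FnSet n) (q : carrier A -> carrier B) (v : carrier X -> carrier B).
Hypotheses (qe : equivariant q) (qw : weq q) (ve : equivariant v).

Lemma lift_ex : exists al : 'I_p -> carrier A,
  (forall k, q (al k) = v (phn k)) /\ (forall k, al (ordS k) = act (pha k).2 (al k)).
Proof.
have hc : @is_ghom (cyc p) (Cay B) (fun k => v (phn k)) (fun k => Cay_arc v (pha k)).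
  move=> e; have [h1 h2] := Hhom e; rewrite /= in h1 h2; split=> /=; first by rewrite h1.
  by rewrite -ve h2.
have [_ sur] := qw H0.
have [al [pa [hom [hq hpa]]]] := sur _ _ hc.
exists al; split=> // k.
have [h1 h2] := hom k; rewrite /= in h1 h2.
have := hpa k; rewrite /Cay_arc => [[_ ea]].
by rewrite -h2 h1 ea.
Qed.

Definition al := proj1_sig (constructive_indefinite_description _ lift_ex).
Lemma al_q k : q (al k) = v (phn k).
Proof. rewrite /al; case: (constructive_indefinite_description _ _) => f [] //. Qed.
Lemma al_S k : al (ordS k) = act (pha k).2 (al k).
Proof. rewrite /al; case: (constructive_indefinite_description _ _) => f [] //. Qed.

Definition idx y : 'I_p := if pickopt (fun k => phn k = y) is Some k then k else Ordinal H0.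

Lemma idx_phn k : idx (phn k) = k.
Proof.
rewrite /idx; have [k' [-> e]] := pickoptP (ex_intro (fun k' => phn k' = phn k) k erefl).
exact: Hinj.
Qed.

Fixpoint hr t y : carrier A :=
  match t with
  | 0 => al (idx y)
  | t'.+1 => match lab y with
             | Some (a, true) => act a (hr t' (ainv a y))
             | Some (a, false) => ainv a (hr t' (act a y))
             | None => hr t' y
             end
  end.

Definition hK y := hr (d y) y.

Lemma hr_q t y : K y -> d y = t -> q (hr t y) = v y.
Proof.
elim: t y => [|t IH] y Ky dy /=.
  have [k ->] := d0_inv Ky dy; by rewrite idx_phn al_q.
have dp : 0 < d y by rewrite dy.
have [l [el [S1 [l1 [Kp dpar]]]]] := par_spec Ky dp.
rewrite el; rewrite /par el in l1 Kp dpar; rewrite dy /= in dpar.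
case: l el S1 l1 Kp dpar => a [] el S1 l1 Kp dpar /=.
  by rewrite qe IH // (equiv_ainv ve) ainvK.
by rewrite (equiv_ainv qe) IH // ve actK.
Qed.

Lemma hK_q y : K y -> q (hK y) = v y.
Proof. move=> Ky; exact: hr_q. Qed.

Lemma hK_act y a : K y -> hK (act a y) = act a (hK y).
Proof.
move=> Ky; have Kay := Kc_act a Ky.
case: (classic (exists k, pha k = (y, a))) => [[k ek]|nC].
  have [h1 h2] := Hhom k; rewrite ek /= in h1 h2.
  rewrite /hK h2 h1 !d_phn /= !idx_phn al_S ek //.
have Se : Sb (y, a) by split.
have le : @links (Cay X) (y, a) y (act a y) by left.
have ne := A_neq Se le.
have l1 := d_lip Se le; have l2 := d_lip Se (links_sym le).
have [up|down] : d (act a y) = (d y).+1 \/ d y = (d (act a y)).+1 by lia.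
- have dp : 0 < d (act a y) by rewrite up.
  have [l [el [S1 d1]]] := lab_spec Kay dp.
  have := B_eq Kay dp Se (links_sym le) ltac:(by rewrite up) el.
  rewrite /hK up /= el; case: l el S1 d1 => a' [] el S1 d1 /= [].
    move=> e1 e2; subst a'; by rewrite actK.
  move=> e1 e2; exfalso; apply: ne; by rewrite -e1.
- have dp : 0 < d y by rewrite down.
  have [l [el [S1 d1]]] := lab_spec Ky dp.
  have := B_eq Ky dp Se le ltac:(by rewrite down) el.
  rewrite /hK down /= el; case: l el S1 d1 => a' [] el S1 d1 /= [].
    move=> e1 e2; subst a'; exfalso; apply: ne.
    have h : act a y = y by rewrite [in LHS]e1 ainvK.
    by rewrite h.
  move=> e2; subst a'; by rewrite ainvK.
Qed.

Lemma backward_comp : exists h : carrier X -> carrier A,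
  (forall y, K y -> q (h y) = v y) /\ (forall y a, K y -> h (act a y) = act a (h y)).
Proof. exists hK; split; [exact: hK_q|exact: hK_act]. Qed.

End Backward.

End Part6.
Import Part6.


Lemma forward n (X : FnSet n) : cofibrant X -> in_Rn X.
Proof.
move=> cof x0.
have [m [m0 [phn [pha [hom [i0 Ki0]]]]]] := cyc_in_K x0 cof.
pose d0 := (pha i0).2.
have qe : equivariant (fun _ : carrier (A0 d0) => (tt : carrier (ptF n))) by [].
have ve : equivariant (fun _ : carrier X => (tt : carrier (ptF n))) by [].
have [g [geq _]] := cof_lift cof qe (weq_A0 d0) ve.
have hom' : @is_ghom (cyc m) (Cay (A0 d0)) (fun i => g (phn i)) (fun i => Cay_arc g (pha i)).
  move=> e; have [h1 h2] := hom e; rewrite /= in h1 h2; rewrite /Cay_arc; split=> /=; first by rewrite h1.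
  by rewrite -h2 (geq (pha e).2).
have [[ly [kp hk]] form] := A0_hom_fix m0 hom'.
move: ly kp hk form.
set R := (sval (g (phn (om m0 0)))).1; set k := (sval (g (phn (om m0 0)))).2.1.
move=> ly kp hk form.
have [hw _] := hom_walk m0 hom.
have Kall : forall t, Kc x0 (phn (om m0 (i0 + t))).
  elim=> [|t IH]; first by rewrite addn0 om_val.
  rewrite addnS hw; exact: Kc_act.
have om_m : om m0 m = om m0 0 by apply: val_inj; rewrite /= modnn mod0n.
have Kx1 : Kc x0 (phn (om m0 0)).
  have := Kall (m - i0); rewrite subnKC ?(ltnW (ltn_ord i0)) //.
  by rewrite om_m.
have gx1 : sval (g (phn (om m0 0))) = (R, (k, [::])) by rewrite form addn0 modn_small.
have xweq : forall t, xw d0 R k (phn (om m0 0)) t = phn (om m0 t).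
  elim=> // t IH; rewrite /= IH hw; congr act; exact: (esym (hk t)).
have xm : xw d0 R k (phn (om m0 0)) m = phn (om m0 0).
  by rewrite xweq om_m.
exact: (forward_body geq ly kp Kx1 gx1 m0 xm).
Qed.

Lemma Kc_eq n (X : FnSet n) (y : carrier X) a : Kc (act a y) = Kc y.
Proof.
apply: functional_extensionality => z; apply: propositional_extensionality; split=> h.
  apply: conn_trans h; apply: (@conn1 (Cay X) _ (y, a)) => //; by left.
apply: conn_trans h; apply: (@conn1 (Cay X) _ (y, a)) => //; by right.
Qed.

Lemma backward n (X : FnSet n) : in_Rn X -> cofibrant X.
Proof.
move=> hR A B q qe qw u v ue ve _.
pose P (K : carrier X -> Prop) (h : carrier X -> carrier A) :=
  (forall y, K y -> q (h y) = v y) /\ (forall y a, K y -> h (act a y) = act a (h y)).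
have ex : forall y, exists h, P (Kc y) h.
  move=> y; have [p [phn [pha [H0 [Hhom [Hinj [_ [HK [Hnoc Hroot]]]]]]]]] := hR y.
  exact: (backward_comp H0 Hhom Hinj HK Hnoc Hroot qe qw ve).
pose h y := proj1_sig (constructive_indefinite_description _ (ex y)) y.
have hP : forall y, P (Kc y) (proj1_sig (constructive_indefinite_description _ (ex y))).
  move=> y; exact: proj2_sig (constructive_indefinite_description _ (ex y)).
exists h; split; last split.
- move=> a y; rewrite /h.
  have -> : proj1_sig (constructive_indefinite_description _ (ex (act a y))) =
            proj1_sig (constructive_indefinite_description _ (ex y)).
    apply: cid_irrel; by rewrite Kc_eq.
  have [_ h2] := hP y; apply: h2; exact: conn_refl.
- by case.
- move=> y; have [h1 _] := hP y; apply: h1; exact: conn_refl.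
Qed.

Theorem proposition6p6 (n : nat) (X : FnSet n) : cofibrant X <-> in_Rn X.
Proof. split; [exact: forward|exact: backward]. Qed.
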